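(* There exists an infinite strictly increasing sequence of square-primes $A_1<A_2<A_3<\cdots$ such that the P-G triangle generated by $\mathfrak u=(A_1,A_2,A_3,\dots)$ has left edge $(b_0,b_1,b_2,\dots)$ satisfying $b_j=1$ for every odd index $j\ge 1$ (that is, every other element of the left edge, starting with the second one, equals $1$).
   Context: A square-prime (SP-number) is a positive integer of the form $k^2p$ with $k\ge 2$ an integer and $p$ a prime. For a finite or infinite sequence $\mathfrak u=(a_0,a_1,\dots)$ of non-negative integers, the P-G triangle generated by $\mathfrak u$ consists of the numbers $d_k^{(j)}$ defined by $d_k^{(0)}=a_k$ and $d_k^{(j+1)}=|d_{k+1}^{(j)}-d_k^{(j)}|$ for $j,k\ge 0$ (for a finite sequence $(a_0,\dots,a_{N-1})$ these are defined for $0\le k\le N-1-j$). Its left (western) edge is the sequence $b_j=d_0^{(j)}$, $j\ge 0$ (so $b_0=a_0$). *)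

(* Defs.v *)
From mathcomp Require Import all_boot.

Definition square_prime (n : nat) : Prop :=
  exists k p : nat, 2 <= k /\ prime p /\ n = k ^ 2 * p.

Definition absdiff (x y : nat) : nat := (x - y) + (y - x).

Fixpoint pg (a : nat -> nat) (j : nat) : nat -> nat :=
  match j with
  | 0 => a
  | j'.+1 => fun k => absdiff (pg a j' k.+1) (pg a j' k)
  end.

Definition left_edge (a : nat -> nat) (j : nat) : nat := pg a j 0.

(* Main.v *)
Require Import Defs.
From mathcomp Require Import all_boot zify.

Fixpoint pw (n : nat) : nat * nat :=
  match n with 0 => (5, 2) | n'.+1 => let (u, w) := pw n' in (5*u + 12*w, 2*u + 5*w) end.
Fixpoint pa (n : nat) : nat * nat :=
  match n with 0 => (11, 9) | n'.+1 => let (a, b) := pa n' in (5*a + 6*b, 4*a + 5*b) end.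

Lemma pw_ok n : (pw n).1 ^ 2 = 6 * (pw n).2 ^ 2 + 1 /\ 5 <= (pw n).1 /\ n.+2 <= (pw n).2.
Proof.
elim: n => [|n [IH1 [IH2 IH3]]] //=.
case: (pw n) IH1 IH2 IH3 => u w /= H1 H2 H3.
split; last lia.
nia.
Qed.

Lemma pa_ok n : 3 * (pa n).2 ^ 2 = 2 * (pa n).1 ^ 2 + 1 /\ n.+2 <= (pa n).1 /\ 2 <= (pa n).2.
Proof.
elim: n => [|n [IH1 [IH2 IH3]]] //=.
case: (pa n) IH1 IH2 IH3 => a b /= H1 H2 H3.
split; last lia.
nia.
Qed.

Definition xf (m L : nat) : nat :=
  if odd m then 2 ^ m * (6 * (pw L).2 ^ 2) else 2 ^ m * (2 * (pa L).1 ^ 2).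

Lemma xf_ok m L : L <= xf m L /\ square_prime (xf m L) /\ square_prime (xf m L + 2 ^ m).
Proof.
rewrite /xf; have := odd_double_half m.
case: (odd m) => /= Hm.
- have [H1 [H2 H3]] := pw_ok L.
  set u := (pw L).1 in H1 H2 *; set w := (pw L).2 in H1 H3 *.
  set r := m./2 in Hm.
  have E : 2 ^ m = 2 * (2 ^ r * 2 ^ r) by rewrite -Hm expnS -expnD addnn.
  have P1 : 1 <= 2 ^ r by rewrite expn_gt0.
  rewrite E; set P := 2 ^ r in P1 *.
  split; [nia|split].
  + exists (2 * P * w), 3; split; [nia|split=>//]; nia.
  + exists (P * u), 2; split; [nia|split=>//]; nia.
- have [H1 [H2 H3]] := pa_ok L.
  set a := (pa L).1 in H1 H2 *; set b := (pa L).2 in H1 H3 *.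
  set r := m./2 in Hm.
  have E : 2 ^ m = 2 ^ r * 2 ^ r by rewrite -Hm add0n -expnD addnn.
  have P1 : 1 <= 2 ^ r by rewrite expn_gt0.
  rewrite E; set P := 2 ^ r in P1 *.
  split; [nia|split].
  + exists (P * a), 2; split; [nia|split=>//]; nia.
  + exists (P * b), 3; split; [nia|split=>//]; nia.
Qed.

Section Tri.
Variable x : nat -> nat.
Hypothesis Hx : forall m, (m + 4) * x m + 2 ^ m.+2 <= x m.+1.

Definition A n := if odd n then x n./2 + 2 ^ n./2 else x n./2.

Lemma A_even m : A m.*2 = x m.
Proof. by rewrite /A odd_double doubleK. Qed.
Lemma A_odd m : A m.*2.+1 = x m + 2 ^ m.
Proof. by rewrite /A /= odd_double /= uphalf_double. Qed.

Fixpoint Y (i m : nat) : nat :=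
  match i with 0 => x m.+1 - x m - 2 ^ m | i'.+1 => Y i' m.+1 - Y i' m end.

Lemma Y_ok i m : 2 ^ m.+1 <= Y i m /\ (m + 3) * Y i m <= Y i m.+1.
Proof.
elim: i m => [|i IH] m /=.
- have H0 := Hx m; have H1 := Hx m.+1.
  rewrite !expnS in H0 H1 *.
  set P := 2 ^ m in H0 H1 *. nia.
- have [H1 H2] := IH m; have [H3 H4] := IH m.+1.
  rewrite !expnS in H1 H3 *. set P := 2 ^ m in H1 H3 *. nia.
Qed.

Lemma tri i m : pg A i.*2.+1 m.*2 = 2 ^ m /\ pg A i.*2.+1 m.*2.+1 = Y i m.
Proof.
elim: i m => [|i IH] m.
- rewrite /= /absdiff.
  have E3 := A_odd m; have E4 := A_even m; have E5 := A_even m.+1; rewrite doubleS in E5.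
  rewrite E3 E4 E5.
  have := Hx m; rewrite !expnS; lia.
- have E1 : forall k, pg A (i.+1).*2.+1 k = absdiff (pg A i.*2.+2 k.+1) (pg A i.*2.+2 k) by [].
  have E2 : forall k, pg A i.*2.+2 k = absdiff (pg A i.*2.+1 k.+1) (pg A i.*2.+1 k) by [].
  have [H1 H2] := IH m; have [H3 H4] := IH m.+1.
  have [Y1 Y2] := Y_ok i m; have [Y3 Y4] := Y_ok i m.+1.
  rewrite doubleS in H3 H4.
  rewrite !E1 !E2 /absdiff H1 H2 H3 H4 /=.
  move: Y1 Y2 Y3 Y4; rewrite !expnS; set P := 2 ^ m; nia.
Qed.

Lemma left_odd j : odd j -> left_edge A j = 1.
Proof.
move=> oj; have := odd_double_half j; rewrite oj add1n => <-.
by rewrite /left_edge (tri j./2 0).1.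
Qed.

Lemma A_incr n : A n < A n.+1.
Proof.
have := odd_double_half n; case: (odd n) => /= <-.
- rewrite add1n -doubleS A_even A_odd; have := Hx n./2; rewrite !expnS; lia.
- rewrite add0n A_even A_odd; have := expn_gt0 2 n./2; lia.
Qed.
End Tri.

Fixpoint xs (m : nat) : nat :=
  match m with 0 => xf 0 0 | m'.+1 => xf m'.+1 ((m' + 4) * xs m' + 2 ^ m'.+2) end.

Theorem theorem2p1 :
  exists A : nat -> nat,
    (forall n, square_prime (A n)) /\
    (forall n, A n < A n.+1) /\
    (forall j, odd j -> left_edge A j = 1).
Proof.
have Hx : forall m, (m + 4) * xs m + 2 ^ m.+2 <= xs m.+1.
  by move=> m; exact: (xf_ok _ _).1.
have Hs : forall m, square_prime (xs m) /\ square_prime (xs m + 2 ^ m).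
  by case=> [|m]; exact: (xf_ok _ _).2.
exists (A xs); split; [|split].
- move=> n; rewrite /A; case: (odd n); [exact: (Hs _).2|exact: (Hs _).1].
- exact: A_incr Hx.
- exact: left_odd Hx.
Qed.
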